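(* Let $p\ge1$ and $s_1,\dots,s_p\in\mathbb{C}$. For all $m,l\in\mathbb{Z}_{\ge0}$, $(\Delta^l\mathtt{c}_{s_1,\dots,s_p})(m)=\mathtt{c}_{s_1,\dots,s_p;\,1-s_1,\dots,1-s_p}(m,l)$.
   Context: Convention $0^0=1$. $\mathtt{c}_{s_1,\dots,s_p}(m)=\sum_{m=m_1\ge\cdots\ge m_p\ge0}\frac{s_1^{m_1-m_2}\cdots s_{p-1}^{m_{p-1}-m_p}}{(m_1+1)\cdots(m_{p-1}+1)}s_p^{m_p}$. For $t_1,\dots,t_p\in\mathbb{C}$, $\mathtt{c}_{s_1,\dots,s_p;t_1,\dots,t_p}(m,l)=\binom{m+l}{m}^{-1}\sum_{m=m_1\ge\cdots\ge m_p\ge0,\ l=l_1\ge\cdots\ge l_p\ge0}\Bigl[\prod_{i=1}^{p-1}\binom{m_i-m_{i+1}+l_i-l_{i+1}}{m_i-m_{i+1}}\frac{s_i^{m_i-m_{i+1}}t_i^{l_i-l_{i+1}}}{m_i+l_i+1}\Bigr]\binom{m_p+l_p}{m_p}s_p^{m_p}t_p^{l_p}$. The difference operator is $(\Delta a)(m)=a(m)-a(m+1)$. *)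

(* Defs.v *)
(* Complex numbers are modelled as R[i] (mathcomp-real-closed
   `complex`) over an arbitrary R : realType, i.e. over the real numbers. *)
From mathcomp Require Import all_boot all_order all_algebra.
From mathcomp Require Import complex.
From mathcomp Require Import reals.
Set Implicit Arguments. Unset Strict Implicit. Unset Printing Implicit Defensive.
Import Order.TTheory GRing.Theory Num.Theory.
Local Open Scope ring_scope.

Section Defs.
Variable C : fieldType.

(* c_{s_1,...,s_p}(m), written as the iterated sum over m = m_1 >= ... >= m_p >= 0:
   c_{[s]}(m) = s^m (with 0^0 = 1), and
   c_{s_1 :: rest}(m) = sum_{m_2 = 0}^{m} s_1^(m - m_2) / (m+1) * c_{rest}(m_2).
   The empty list (p = 0) is junk (value 0) and is excluded in the theorem. *)
Fixpoint c1 (s : seq C) (m : nat) : C :=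
  match s with
  | [::] => 0
  | [:: a] => a ^+ m
  | a :: s' => \sum_(k < m.+1) a ^+ (m - k) / (m.+1)%:R * c1 s' k
  end.

(* The un-normalised double iterated sum over m = m_1 >= ... >= m_p >= 0 and
   l = l_1 >= ... >= l_p >= 0, for a list of pairs (s_i, t_i). *)
Fixpoint c2sum (st : seq (C * C)) (m l : nat) : C :=
  match st with
  | [::] => 0
  | [:: (a, b)] => ('C(m + l, m))%:R * a ^+ m * b ^+ l
  | (a, b) :: st' =>
      \sum_(k < m.+1) \sum_(j < l.+1)
        ('C(m - k + (l - j), m - k))%:R * (a ^+ (m - k) * b ^+ (l - j))
          / (m + l).+1%:R * c2sum st' k j
  end.

Definition c2 (s t : seq C) (m l : nat) : C :=
  ('C(m + l, m))%:R^-1 * c2sum (zip s t) m l.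

Definition Delta (a : nat -> C) : nat -> C := fun m => a m - a m.+1.

End Defs.

(* Main.v *)
Require Import Defs.
From mathcomp Require Import all_boot all_order all_algebra.
From mathcomp Require Import complex.
From mathcomp Require Import reals.
From mathcomp Require Import ring lra zify.
Set Implicit Arguments. Unset Strict Implicit. Unset Printing Implicit Defensive.
Import Order.TTheory GRing.Theory Num.Theory.
Local Open Scope ring_scope.

Lemma binP1 a c : (a.+1 * 'C((a+c).+1, a.+1) = (a+c).+1 * 'C(a+c,a))%N.
Proof. by rewrite -mul_bin_diag. Qed.

Lemma binP2 a c : (c.+1 * 'C((a+c).+1, a) = (a+c).+1 * 'C(a+c,a))%N.
Proof.
have h1 : 'C((a+c).+1, a) = 'C((c+a).+1, c.+1).
  rewrite -(bin_sub (m:=a)); last by rewrite ltnW // ltnS leq_addr.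
  by congr 'C(_,_); rewrite addnC; lia.
have h2 : 'C(a+c, a) = 'C(c+a, c).
  rewrite -(bin_sub (m:=a)) ?leq_addr //; congr 'C(_,_); lia.
by rewrite h1 h2 binP1 addnC.
Qed.

Section Conv.
Variable C : numFieldType.
Implicit Types f g : nat -> nat -> C.

Definition conv f g (m l : nat) : C :=
  \sum_(k < m.+1) \sum_(j < l.+1) f (m - k)%N (l - j)%N * g k j.

Definition Tprop f := forall a c : nat,
  a.+1%:R * f a.+1 c + c.+1%:R * f a c.+1 = (a + c).+1%:R * f a c.

Lemma conv_prop f g m l : Tprop f -> Tprop g ->
  m.+1%:R * conv f g m.+1 l + l.+1%:R * conv f g m l.+1 =
  (m + l).+2%:R * conv f g m l.
Proof.
move=> Hf Hg.
rewrite /conv !mulr_sumr.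
(* first sum : split m.+1 = (m.+1 - k) + k *)
have E1 : \sum_(k < m.+2) m.+1%:R * (\sum_(j < l.+1) f (m.+1 - k)%N (l - j)%N * g k j)
  = \sum_(k < m.+1) \sum_(j < l.+1)
      ((m - k).+1%:R * f (m - k).+1 (l - j)%N * g k j
       + f (m - k)%N (l - j)%N * (k.+1%:R * g k.+1 j)).
  have -> : \sum_(k < m.+2) m.+1%:R * (\sum_(j < l.+1) f (m.+1 - k)%N (l - j)%N * g k j)
     = \sum_(k < m.+2) \sum_(j < l.+1) (m.+1 - k)%N%:R * f (m.+1 - k)%N (l - j)%N * g k j
       + \sum_(k < m.+2) \sum_(j < l.+1) f (m.+1 - k)%N (l - j)%N * (k%:R * g k j).
    rewrite -big_split /=; apply: eq_bigr => k _.
    rewrite mulr_sumr -big_split /=; apply: eq_bigr => j _.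
    have -> : (m.+1)%:R = (m.+1 - k)%N%:R + k%:R :> C.
      by rewrite -natrD subnK // -ltnS.
    ring.
  rewrite big_ord_recr /= subnn.
  rewrite [X in _ + X + _](_ : _ = 0); last by apply: big1 => j _; rewrite !mul0r.
  rewrite addr0 [X in _ + X = _]big_ord_recl /=.
  rewrite [X in _ + (X + _) = _](_ : _ = 0); last by apply: big1 => j _; rewrite mul0r mulr0.
  rewrite add0r.
  rewrite -big_split /=; apply: eq_bigr => k _.
  rewrite -big_split /=; apply: eq_bigr => j _.
  rewrite subSn; last by rewrite -ltnS.
  by rewrite /bump /= add1n.
have E2 : \sum_(k < m.+1) l.+1%:R * (\sum_(j < l.+2) f (m - k)%N (l.+1 - j)%N * g k j)
  = \sum_(k < m.+1) \sum_(j < l.+1)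
      ((l - j).+1%:R * f (m - k)%N (l - j).+1 * g k j
       + f (m - k)%N (l - j)%N * (j.+1%:R * g k j.+1)).
  apply: eq_bigr => k _.
  rewrite mulr_sumr.
  have -> : \sum_(j < l.+2) l.+1%:R * (f (m - k)%N (l.+1 - j)%N * g k j)
     = \sum_(j < l.+2) (l.+1 - j)%N%:R * f (m - k)%N (l.+1 - j)%N * g k j
       + \sum_(j < l.+2) f (m - k)%N (l.+1 - j)%N * (j%:R * g k j).
    rewrite -big_split /=; apply: eq_bigr => j _.
    have -> : (l.+1)%:R = (l.+1 - j)%N%:R + j%:R :> C.
      by rewrite -natrD subnK // -ltnS.
    ring.
  rewrite big_ord_recr /= subnn mul0r mul0r addr0.
  rewrite [X in _ + X = _]big_ord_recl /= mul0r mulr0 add0r.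
  rewrite -big_split /=; apply: eq_bigr => j _.
  rewrite subSn; last by rewrite -ltnS.
  by rewrite /bump /= add1n.
rewrite E1 E2 -big_split /=; apply: eq_bigr => k _.
rewrite mulr_sumr -big_split /=; apply: eq_bigr => j _.
have hk : (k <= m)%N by rewrite -ltnS.
have hj : (j <= l)%N by rewrite -ltnS.
have Ef := Hf (m - k)%N (l - j)%N.
have Eg := Hg k j.
have -> : (m + l).+2%:R = (m - k + (l - j)).+1%:R + (k + j).+1%:R :> C.
  rewrite -natrD; congr (_%:R); lia.
rewrite mulrDl [X in _ = X + _]mulrA -Ef [X in _ = _ + X]mulrCA -Eg.
ring.
Qed.



Definition Pf (s : C) (a c : nat) : C := ('C(a + c, a))%:R * (s ^+ a * (1 - s) ^+ c).
Definition Qf (b : nat -> C) (k j : nat) : C := ('C(k + j, k))%:R * iter j (@Delta C) b k.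

Lemma Pf_prop s : Tprop (Pf s).
Proof.
move=> a c; rewrite /Pf addSn addnS.
rewrite !mulrA -!natrM binP1 binP2 !exprS.
set N := ((a + c).+1 * 'C(a + c, a))%N%:R.
transitivity (N * s ^+ a * (1 - s) ^+ c * (s + (1 - s))); first ring.
by rewrite addrCA subrr addr0 mulr1.
Qed.

Lemma Qf_prop b : Tprop (Qf b).
Proof.
move=> k j; rewrite /Qf addSn addnS.
rewrite !mulrA -!natrM binP1 binP2 iterS /Delta.
set D := iter j (@Delta C) b.
rewrite natrM; ring.
Qed.


Definition Lop (s : C) (b : nat -> C) (m : nat) : C :=
  \sum_(k < m.+1) s ^+ (m - k) / (m.+1)%:R * b k.
Definition Ff s b m l :=
  conv (Pf s) (Qf b) m l / ((m + l).+1 * 'C(m + l, m))%N%:R.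

Lemma natr_neq0 n : (0 < n)%N -> (n%:R : C) != 0.
Proof. by rewrite pnatr_eq0 -lt0n. Qed.

Lemma Ff_rec s b m l : Ff s b m l.+1 = Ff s b m l - Ff s b m.+1 l.
Proof.
have H := conv_prop m l (Pf_prop s) (Qf_prop b).
rewrite /Ff addnS addSn.
have hX := binP2 m l. have hY := binP1 m l.
move: H.
set G := conv _ _ m l; set G1 := conv _ _ m l.+1; set G2 := conv _ _ m.+1 l.
rewrite !natrM.
move/(congr1 (fun n : nat => n%:R : C)): hX; rewrite !natrM => hX.
move/(congr1 (fun n : nat => n%:R : C)): hY; rewrite !natrM => hY.
have nZ : ('C(m + l, m))%:R != 0 :> C by apply: natr_neq0; rewrite bin_gt0 leq_addr.
have nX : ('C((m + l).+1, m))%:R != 0 :> C by apply: natr_neq0; rewrite bin_gt0 leqW // leq_addr.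
have nY : ('C((m + l).+1, m.+1))%:R != 0 :> C by apply: natr_neq0; rewrite bin_gt0 ltnS leq_addr.
have n1 : (m + l).+1%:R != 0 :> C by apply: natr_neq0.
have n2 : (m + l).+2%:R != 0 :> C by apply: natr_neq0.
have nl : l.+1%:R != 0 :> C by apply: natr_neq0.
have nm : m.+1%:R != 0 :> C by apply: natr_neq0.
move: hX hY nZ nX nY n1 n2 nl nm.
set X := ('C((m + l).+1, m))%:R; set Y := ('C((m + l).+1, m.+1))%:R.
set Z := ('C(m + l, m))%:R.
set A1 := (m + l).+1%:R; set A2 := (m + l).+2%:R.
set L1 := l.+1%:R; set M1 := m.+1%:R.
move=> hX hY nZ nX nY n1 n2 nl nm H.
have eX : X = A1 * Z / L1 by rewrite -hX mulrC mulKf.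
have eY : Y = A1 * Z / M1 by rewrite -hY mulrC mulKf.
have eG1 : G1 = (A2 * G - M1 * G2) / L1.
  by rewrite -H addrC addKr mulrC mulKf.
rewrite eX eY eG1.
field.
rewrite -!natrD !nat1r !pnatr_eq0 /= -lt0n bin_gt0 leq_addr //.
Qed.

Lemma main_rec s a0 b : (forall m, a0 m = Lop s b m) ->
  forall l m, iter l (@Delta C) a0 m = Ff s b m l.
Proof.
move=> Ha l; elim: l => [|l IH] m.
  rewrite /= Ha /Lop /Ff /conv addn0 binn muln1 mulr_suml.
  apply: eq_bigr => k _; rewrite big_ord1 /Pf /Qf /= !addn0 !binn subn0.
  by rewrite expr0 !mulr1 !mul1r mulrAC.
by rewrite iterS /Delta !IH Ff_rec.
Qed.

Lemma aux (s : seq C) : (0 < size s)%N -> forall m l,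
  c2sum (zip s [seq 1 - x | x <- s]) m l = ('C(m + l, m))%:R * iter l (@Delta C) (c1 s) m.
Proof.
elim: s => [//|a s' IH] _ m l.
case: s' IH => [|b0 s''] IH.
  rewrite /= -mulrA; congr (_ * _).
  elim: l m => [|l IHl] m; first by rewrite expr0 mulr1.
  by rewrite iterS /Delta -!IHl exprS !exprSr; ring.
have -> : c2sum (zip (a :: b0 :: s'') [seq 1 - x | x <- a :: b0 :: s'']) m l =
  \sum_(k < m.+1) \sum_(j < l.+1)
        ('C(m - k + (l - j), m - k))%:R * (a ^+ (m - k) * (1 - a) ^+ (l - j))
          / (m + l).+1%:R * c2sum (zip (b0 :: s'') [seq 1 - x | x <- b0 :: s'']) k j by [].
rewrite (main_rec (s:=a) (a0 := c1 (a :: b0 :: s'')) (b := c1 (b0 :: s''))) //.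
rewrite /Ff /conv natrM.
have nZ : ('C(m + l, m))%:R != 0 :> C by apply: natr_neq0; rewrite bin_gt0 leq_addr.
rewrite invfM.
set S := \sum_(k < m.+1) \sum_(j < l.+1) Pf _ _ _ * _.
have -> : ('C(m + l, m))%:R * (S * ((m + l).+1%:R^-1 / ('C(m + l, m))%:R))
  = S * (m + l).+1%:R^-1.
  field; by rewrite nZ -natrD nat1r pnatr_eq0.
rewrite /S mulr_suml.
apply: eq_bigr => k _; rewrite mulr_suml; apply: eq_bigr => j _.
rewrite IH // /Pf /Qf; ring.
Qed.
End Conv.

Local Open Scope complex_scope.

Theorem proposition3p2 (R : realType) (s : seq R[i]) :
  (0 < size s)%N ->
  forall m l : nat,
    iter l (@Delta _) (c1 s) m = c2 s [seq 1 - x | x <- s] m l.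
Proof.
move=> hs m l; rewrite /c2 aux // mulrA mulVf ?mul1r //.
by apply: natr_neq0; rewrite bin_gt0 leq_addr.
Qed.
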